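(* Let $X$ be a compact topological space, $B\subseteq\mathbb{R}^X$ an $\mathbb{R}$-subalgebra consisting of continuous functions on $X$, and $Q\subseteq B$ a quadratic module with $K_{Q,X}=X$ and $\overline{m(X)}=K_{Q,Y_B}$. Let $q\in B$ satisfy $\{x\in X\mid q(x)=0\}\subseteq\overline{\{x\in X\mid q(x)<0\}}$ (closure in $X$). Let $f=\chi_{\{q\ge0\}}$, $A=B[f]\subseteq\mathbb{R}^X$, and let $Q'$ be the quadratic module of $A$ generated by $Q$ and $qf$, $q(f-1)$. Then $K_{Q',X}=X$ and $\overline{m(X)}=K_{Q',Y_A}$.
   Context: A quadratic module of a commutative unital $\mathbb{R}$-algebra $C$ is a subset $Q\subseteq C$ with $Q+Q\subseteq Q$, $c^2Q\subseteq Q$ for all $c\in C$, and $1\in Q$. For an $\mathbb{R}$-subalgebra $C\subseteq\mathbb{R}^X$ and a quadratic module $Q$ of $C$: $K_{Q,X}:=\{x\in X\mid g(x)\ge0\ \forall g\in Q\}$; $Y_C$ is the set of unital $\mathbb{R}$-algebra homomorphisms $C\to\mathbb{R}$, with the weakest topology making all maps $y\mapsto y(c)$ continuous; $K_{Q,Y_C}:=\{y\in Y_C\mid y(g)\ge0\ \forall g\in Q\}$; $m\colon X\to Y_C$, $m(x)(c)=c(x)$; $\overline{m(X)}$ is the closure in $Y_C$. $\chi_S$ is the characteristic function of $S$, and $\{q\ge0\}=\{x\in X\mid q(x)\ge0\}$. *)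

(* Defs.v *)
From HB Require Import structures.
From mathcomp Require Import all_boot all_order all_algebra.
From mathcomp Require Import all_classical all_reals all_analysis.
Unset Printing Implicit Defensive.
Import Order.TTheory GRing.Theory Num.Theory.
Import numFieldNormedType.Exports.
Local Open Scope classical_set_scope.
Local Open Scope ring_scope.

Section Defs.
Variables (R : realType) (X : Type).

Definition is_subalgebra (C : set (X -> R)) : Prop :=
  [/\ C (fun _ => 1),
      (forall c d, C c -> C d -> C (c \+ d)),
      (forall c d, C c -> C d -> C (c \* d)) &
      (forall (r : R) c, C c -> C (fun x => r * c x))].

Definition gen_subalgebra (S : set (X -> R)) : set (X -> R) :=
  [set g | forall D, is_subalgebra D -> S `<=` D -> D g].

Definition is_qmodule (C Q : set (X -> R)) : Prop :=
  [/\ Q `<=` C,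
      (forall g h, Q g -> Q h -> Q (g \+ h)),
      (forall c g, C c -> Q g -> Q (fun x => c x ^+ 2 * g x)) &
      Q (fun _ => 1)].

Definition gen_qmodule (C S : set (X -> R)) : set (X -> R) :=
  [set g | forall Q, is_qmodule C Q -> S `<=` Q -> Q g].

Definition KX (Q : set (X -> R)) : set X :=
  [set x | forall g, Q g -> 0 <= g x].

(* the carrier of Y_C: functions on the elements of C, with the
   product (= pointwise = weak) topology *)

Definition Y (C : set (X -> R)) : set {ptws {c : X -> R | C c} -> R} :=
  [set y | (forall h1 : C (fun _ => 1), y (exist _ _ h1) = 1) /\
    (forall c d (hc : C c) (hd : C d) (hcd : C (c \+ d)),
        y (exist _ _ hcd) = y (exist _ _ hc) + y (exist _ _ hd)) /\
    (forall c d (hc : C c) (hd : C d) (hcd : C (c \* d)),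
        y (exist _ _ hcd) = y (exist _ _ hc) * y (exist _ _ hd)) /\
    (forall (r : R) c (hc : C c) (hrc : C (fun x => r * c x)),
        y (exist _ _ hrc) = r * y (exist _ _ hc))].


Definition KY (C Q : set (X -> R)) : set {ptws {c : X -> R | C c} -> R} :=
  [set y | Y C y /\ forall g (hg : C g), Q g -> 0 <= y (exist _ _ hg)].


Definition m (C : set (X -> R)) (x : X) : {ptws {c : X -> R | C c} -> R} :=
  fun c => proj1_sig c x.

End Defs.
Arguments is_subalgebra {R X} C.
Arguments gen_subalgebra {R X} S _.
Arguments is_qmodule {R X} C Q.
Arguments gen_qmodule {R X} C S _.
Arguments KX {R X} Q _.
Arguments Y {R X} C _.
Arguments KY {R X} C Q _.
Arguments m {R X} C x _.

(* closure of m(X) in Y_C (subspace of the product space) *)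
Definition closure_mX (R : realType) (X : Type) (C : set (X -> R)) : set {ptws {c : X -> R | C c} -> R} :=
  closure (range (m C)) `&` Y C.
Arguments closure_mX {R X} C _.

(* Main.v *)
Require Import Defs.
From HB Require Import structures.
From mathcomp Require Import all_boot all_order all_algebra.
From mathcomp Require Import all_classical all_reals all_analysis.
From mathcomp Require Import ring lra.
Import Order.TTheory GRing.Theory Num.Theory.
Import numFieldNormedType.Exports.
Local Open Scope classical_set_scope.
Local Open Scope ring_scope.

Lemma ev_cont (R : realType) (I : Type) (i : I) :
  continuous (fun f : {ptws I -> R} => f i).
Proof. exact: (@proj_continuous {classic I} (fun _ => R) i). Qed.

Lemma ptws_haus (R : realType) (I : Type) : hausdorff_space {ptws I -> R}.
Proof. exact: (@hausdorff_product {classic I} (fun _ => R)). Qed.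

Lemma ptws_cont (R : realType) (I : Type) (T : topologicalType) (g : T -> {ptws I -> R}) :
  (forall i, continuous (fun t => g t i)) -> continuous g.
Proof.
move=> ctsf x; apply/cvg_sup.
move=> i; move: x; apply/(@continuousP _ (initial_topology (@^~ i))) => A [B ? E].
rewrite -E.
have -> : g @^-1` (@^~ i @^-1` B) = (fun t => g t i) @^-1` B by [].
by apply: open_comp => // + _; exact: ctsf.
Qed.

Section Helpers.
Variables (R : realType) (X : Type).

Lemma gen_sub_alg (S : set (X -> R)) : is_subalgebra (gen_subalgebra S).
Proof.
split.
- by move=> D [].
- by move=> c d hc hd D hD SD; case: (hD) => _ H _ _; apply: H; [apply: hc|apply: hd].
- by move=> c d hc hd D hD SD; case: (hD) => _ _ H _; apply: H; [apply: hc|apply: hd].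
- by move=> r c hc D hD SD; case: (hD) => _ _ _ H; apply: H; apply: hc.
Qed.

Lemma gen_sub_incl (S : set (X -> R)) : S `<=` gen_subalgebra S.
Proof. by move=> g Sg D _ SD; apply: SD. Qed.

Lemma gen_qm_incl (C S : set (X -> R)) : S `<=` gen_qmodule C S.
Proof. by move=> g Sg Q _ SQ; apply: SQ. Qed.

Lemma yeq (C : set (X -> R)) (y : {ptws {c : X -> R | C c} -> R}) g1 g2 h1 h2 :
  g1 = g2 -> y (exist _ g1 h1) = y (exist _ g2 h2).
Proof. by move=> e; subst g2; congr y; congr exist; apply: Prop_irrelevance. Qed.

End Helpers.
Arguments yeq {R X C} y {g1 g2} h1 h2.
Lemma decomp (R : realType) (X : Type) (B : set (X -> R)) (f : X -> R) :
  is_subalgebra B -> (forall x, f x * f x = f x) ->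
  forall a, gen_subalgebra (B `|` [set f]) a ->
  exists b0 b1, [/\ B b0, B b1 & a = b0 \+ b1 \* f].
Proof.
move=> sB ff a ha; case: (sB) => B1 BD BM BZ.
have B0 : B (fun x => 0 * (fun _ : X => 1) x) by apply: BZ.
apply: (ha (fun a => exists b0 b1, [/\ B b0, B b1 & a = b0 \+ b1 \* f])).
- split.
  + exists (fun _ => 1), (fun x => 0 * (fun _ : X => 1) x); split => //.
    by apply: funext => x /=; ring.
  + move=> c d [b0 [b1 [h0 h1 ->]]] [c0 [c1 [k0 k1 ->]]].
    exists (b0 \+ c0), (b1 \+ c1); split; [exact: BD|exact: BD|].
    by apply: funext => x /=; ring.
  + move=> c d [b0 [b1 [h0 h1 ->]]] [c0 [c1 [k0 k1 ->]]].
    exists (b0 \* c0), ((b0 \* c1) \+ (b1 \* c0) \+ (b1 \* c1)); split.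
    * exact: BM.
    * by apply: (BD); first apply: (BD); apply: (BM).
    * apply: funext => x /=.
      transitivity (b0 x * c0 x + (b0 x * c1 x + b1 x * c0 x) * f x
                    + b1 x * c1 x * (f x * f x)); first ring.
      by rewrite ff; ring.
  + move=> r c [b0 [b1 [h0 h1 ->]]].
    exists (fun x => r * b0 x), (fun x => r * b1 x); split; [exact: BZ|exact: BZ|].
    by apply: funext => x /=; ring.
- move=> g [Bg|->].
  + exists g, (fun x => 0 * (fun _ : X => 1) x); split => //.
    by apply: funext => x /=; ring.
  + exists (fun x => 0 * (fun _ : X => 1) x), (fun _ => 1); split => //.
    by apply: funext => x /=; ring.
Qed.

Theorem proposition3p5 (R : realType) (X : topologicalType)
  (B Q : set (X -> R)) (q : X -> R) :
  compact [set: X] ->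
  is_subalgebra B ->
  (forall b, B b -> continuous b) ->
  is_qmodule B Q ->
  KX Q = [set: X] ->
  closure_mX B = KY B Q ->
  B q ->
  [set x | q x = 0] `<=` closure [set x | q x < 0] ->
  let f : X -> R := \1_[set x | 0 <= q x] in
  let A := gen_subalgebra (B `|` [set f]) in
  let Q' := gen_qmodule A
      (Q `|` [set (q \* f); (q \* (f \- (fun _ => 1)))]) in
  KX Q' = [set: X] /\ closure_mX A = KY A Q'.
Proof.
move=> cX sB cB qmQ KXQ clB Bq hq f A Q'.
have sA : is_subalgebra A by apply: gen_sub_alg.
case: (sA) => A1 AD AM AZ.
case: (sB) => B1 BD BM BZ.
case: (qmQ) => QB QD QM Q1.
have BA : B `<=` A by move=> b hb; apply: gen_sub_incl; left.
have Af : A f by apply: gen_sub_incl; right.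
have fE : forall x, f x = if 0 <= q x then 1 else 0.
  move=> x; rewrite /f indicE; case: ifP => h.
    by rewrite mem_set.
  by rewrite memNset //= h.
have ff : forall x, f x * f x = f x.
  by move=> x; rewrite fE; case: ifP; rewrite ?mulr1 ?mulr0.
have Am1 : A (fun x => -1 * (fun _ : X => 1) x) by apply: (AZ).
have Afm1 : A (f \+ (fun x => -1 * (fun _ : X => 1) x)) by apply: (AD).
have em1 : (f \- (fun _ => 1)) = (f \+ (fun x => -1 * (fun _ : X => 1) x)).
  by apply: funext => x /=; ring.
have Aqf : A (q \* f) by apply: (AM) => //; apply: (BA).
have Aqf1 : A (q \* (f \- (fun _ => 1))) by rewrite em1; apply: (AM) => //; apply: (BA).
have Q'gen : forall g, (Q `|` [set (q \* f); (q \* (f \- (fun _ => 1)))]) g -> Q' g.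
  exact: gen_qm_incl.
have KQ' : KX Q' = [set: X].
  apply/seteqP; split => // x _ g Q'g.
  have : (fun g => A g /\ forall x, 0 <= g x) g; last by case=> _; apply.
  apply: (Q'g (fun g => A g /\ forall x, 0 <= g x)).
  - split.
    + by move=> h [].
    + by move=> g1 g2 [h1 p1] [h2 p2]; split; [apply: (AD) | move=> z /=; apply: addr_ge0].
    + move=> c g1 hc [h1 p1]; split; first by apply: (AM) => //; apply: (AM).
      by move=> z /=; apply: mulr_ge0 => //; apply: sqr_ge0.
    + by split => // z; apply: ler01.
  - move=> g1 [Qg1|[->|->]].
    + split; first by apply: (BA); apply: (QB).
      by move=> z; have : [set: X] z by []; rewrite -KXQ; apply.
    + split => // z /=; rewrite fE; case: ifP => h; rewrite ?mulr1 ?mulr0 //.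
    + split => // z /=; rewrite fE; case: ifP => h; rewrite ?subrr ?mulr0 //.
      rewrite sub0r mulrN1 oppr_ge0; apply: ltW; rewrite ltNge h //.
split => //.
apply/seteqP; split.
- move=> y [cly Yy]; split => // g hg Q'g.
  have cl : closed [set z : {ptws {c : X -> R | A c} -> R} | 0 <= z (exist _ g hg)].
    apply: (@preimage_closed _ _ (fun z : {ptws {c : X -> R | A c} -> R} => z (exist _ g hg)) [set r : R | 0 <= r]).
      by move=> z _; apply: ev_cont.
    exact: closed_ge.
  have sub : range (m A) `<=` [set z : {ptws {c : X -> R | A c} -> R} | 0 <= z (exist _ g hg)].
    move=> _ [x _ <-]; rewrite /m /=.
    by have : [set: X] x by []; rewrite -KQ'; apply.
  suff : [set z : {ptws {c : X -> R | A c} -> R} | 0 <= z (exist _ g hg)] y by [].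
  rewrite ((closure_id _).1 cl); exact: (closureS sub).
- move=> y [Yy Py]; split => //.
  case: (Yy) => y1 [yD [yM yZ]].
  pose yB : {ptws {c : X -> R | B c} -> R} :=
    fun c => y (exist _ (sval c) (BA _ (svalP c))).
  have YyB : Y B yB.
    split; first by move=> h1; rewrite /yB /= (yeq y _ A1 erefl); exact: y1.
    split; first by move=> c d hc hd hcd; exact: yD.
    split; first by move=> c d hc hd hcd; exact: yM.
    by move=> r c hc hrc; exact: yZ.
  have KYB : KY B Q yB.
    split => // g hg Qg; rewrite /yB /=; apply: Py; apply: Q'gen; left; exact: Qg.
  rewrite -clB in KYB; case: KYB => clyB _.
  have closedR : closed (range (m B)).
    apply: compact_closed; first exact: ptws_haus.
    apply: continuous_compact => //; apply: continuous_subspaceT.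
    by apply: ptws_cont => i; rewrite /m; exact: cB _ (svalP i).
  move: clyB; rewrite -(closure_id _).1 // => -[x _ mx].
  have yb : forall b (hb : A b), B b -> y (exist _ b hb) = b x.
    move=> b hb Bb.
    have := congr1 (fun z => z (exist _ b Bb)) mx; rewrite /m /yB /= => ->.
    exact: yeq.
  set yf := y (exist _ f Af).
  have ydec : forall a (ha : A a) b0 b1, B b0 -> B b1 -> a = b0 \+ b1 \* f ->
      y (exist _ a ha) = b0 x + b1 x * yf.
    move=> a ha b0 b1 h0 h1 ea.
    rewrite (yeq y ha (AD _ _ (BA _ h0) (AM _ _ (BA _ h1) Af)) ea).
    rewrite (yD _ _ (BA _ h0) (AM _ _ (BA _ h1) Af)).
    by rewrite (yM _ _ (BA _ h1) Af) (yb _ _ h0) (yb _ _ h1).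
  have yff : yf * yf = yf.
    rewrite -(yM f f Af Af (AM _ _ Af Af)); apply: yeq.
    by apply: funext => z; exact: ff z.
  have yq : y (exist _ q (BA _ Bq)) = q x := yb _ _ Bq.
  have h1 : 0 <= q x * yf.
    rewrite -yq -(yM q f _ Af Aqf); apply: Py; apply: Q'gen; right; left.
    by [].
  have h2 : 0 <= q x * (yf - 1).
    have -> : q x * (yf - 1) = y (exist _ _ Aqf1).
      rewrite (yeq y Aqf1 (AM _ _ (BA _ Bq) Afm1) (congr1 (fun h => q \* h) em1)).
      rewrite (yM _ _ (BA _ Bq) Afm1) yq (yD _ _ Af Am1) (yZ _ _ A1) y1.
      by rewrite mulr1.
    by apply: Py; apply: Q'gen; right; right.
  have [yf0|yf1] : yf = 0 \/ yf = 1.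
    have : yf * (yf - 1) = 0 by rewrite mulrBr mulr1 yff subrr.
    by move/eqP; rewrite mulf_eq0 subr_eq0 => /orP[/eqP|/eqP]; [left|right].
  - have qx : q x <= 0 by move: h2; rewrite yf0 sub0r mulrN1 oppr_ge0.
    have hx : closure [set z | q z < 0] x.
      have [qlt|qeq] : q x < 0 \/ q x = 0.
        by move: qx; rewrite le_eqVlt => /orP[/eqP|]; [right|left].
        exact: subset_closure.
      exact: hq.
    pose dec := fun a : {c : X -> R | A c} => cid ((@decomp R X B f sB ff _ (svalP a))).
    pose psi (z : X) : {ptws {c : X -> R | A c} -> R} := fun a => sval (dec a) z.
    have cpsi : continuous psi.
      apply: ptws_cont => a; rewrite /psi.
      have [b1 [h0 _ _]] := svalP (dec a); exact: cB.
    have psix : psi x = y.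
      apply: funext => -[a ha]; rewrite /psi.
      have [b1 [h0 h1' ea]] := svalP (dec (exist _ a ha)).
      by rewrite (ydec a ha _ _ h0 h1' ea) yf0 mulr0 addr0.
    have psim : forall z, q z < 0 -> psi z = m A z.
      move=> z qz; apply: funext => -[a ha]; rewrite /psi /m /=.
      have [b1 [h0 h1' ea]] := svalP (dec (exist _ a ha)).
      move: ea => /= ea.
      rewrite [in RHS]ea /= fE.
      have -> : (0 <= q z) = false by rewrite leNgt qz.
      by rewrite mulr0 addr0.
    rewrite -psix => U /(cpsi x) /hx [z [qz Uz]].
    by exists (psi z); split => //; exists z => //; rewrite psim.
  - have qx : 0 <= q x by move: h1; rewrite yf1 mulr1.
    apply: subset_closure; exists x => //; apply: funext => -[a ha]; rewrite /m /=.
    have [b0 [b1 [h0 h1' ea]]] := (@decomp R X B f sB ff _ ha).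
    by rewrite (ydec a ha _ _ h0 h1' ea) yf1 ea /= fE qx.
Qed.
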